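(* Let $\Sigma=(X,\mathcal D,\phi)$ be an RFC system. If there is a bounded uniformly globally weakly attractive set $\mathcal A\subset X$, then $\Sigma$ is Lagrange stable.
   Context: $\mathbb R_+=[0,\infty)$. A system is a triple $\Sigma=(X,\mathcal D,\phi)$ where $(X,\|\cdot\|)$ is a normed linear space; $D$ is a nonempty subset of some normed linear space; $\mathcal D$ is a set of functions $d:\mathbb R_+\to D$ closed under time shifts $d\mapsto d(\cdot+\tau)$, $\tau\ge0$, and under concatenation ($d(s)=d_1(s)$ for $s\in[0,t]$, $d(s)=d_2(s-t)$ for $s>t$, any $d_1,d_2\in\mathcal D$, $t>0$); and $\phi:\mathbb R_+\times X\times\mathcal D\to X$ is an everywhere defined map with $\phi(0,x,d)=x$; $\phi(t,x,d)=\phi(t,x,\tilde d)$ whenever $d=\tilde d$ on $[0,t]$; $t\mapsto\phi(t,x,d)$ continuous; and $\phi(h,\phi(t,x,d),d(t+\cdot))=\phi(t+h,x,d)$ for all $t,h\ge0$. $\|x\|_{\mathcal A}=\inf_{y\in\mathcal A}\|x-y\|$. $\mathcal K_\infty$: continuous strictly increasing unbounded $\gamma:\mathbb R_+\to\mathbb R_+$ with $\gamma(0)=0$. $\Sigma$ is RFC if for all $C,\tau>0$: $\sup\{\|\phi(t,x,d)\|:\|x\|\le C,d\in\mathcal D,t\in[0,\tau]\}<\infty$. $\mathcal A$ is uniformly globally weakly attractive if for all $\varepsilon,r>0$ there is $\tau$ such that for all $x$ with $\|x\|_{\mathcal A}\le r$ and all $d\in\mathcal D$ there exists $t\le\tau$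 with $\|\phi(t,x,d)\|_{\mathcal A}\le\varepsilon$. $\Sigma$ is Lagrange stable if there is a bounded set $\mathcal B\subset X$, $\sigma\in\mathcal K_\infty$ and $c>0$ with $\|\phi(t,x,d)\|_{\mathcal B}\le\sigma(\|x\|_{\mathcal B})+c$ for all $x\in X,t\ge0,d\in\mathcal D$ (equivalently, with $\mathcal B=\{0\}$). *)

(* Defs.v *)
From HB Require Import structures.
From mathcomp Require Import all_boot all_order all_algebra.
From mathcomp Require Import all_classical all_reals all_analysis.
Set Implicit Arguments. Unset Strict Implicit. Unset Printing Implicit Defensive.
Import Order.TTheory GRing.Theory Num.Theory.
Import numFieldNormedType.Exports.
Local Open Scope classical_set_scope.
Local Open Scope ring_scope.

Section Defs.
Variable R : realType.

Lemma tdiff_ge0 (s t : {nonneg R}) : 0 <= Num.max (s%:num - t%:num) 0.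
Proof. by rewrite le_max lexx orbT. Qed.
Definition tdiff (s t : {nonneg R}) : {nonneg R} := NngNum (tdiff_ge0 s t).

Definition tadd (s t : {nonneg R}) : {nonneg R} := (s%:num + t%:num)%:nng.

Variable U : normedModType R.

Definition dshift (d : {nonneg R} -> U) (tau : {nonneg R}) : {nonneg R} -> U :=
  fun s => d (tadd s tau).

Definition dconcat (d1 d2 : {nonneg R} -> U) (t : {nonneg R}) : {nonneg R} -> U :=
  fun s => if s%:num <= t%:num then d1 s else d2 (tdiff s t).

Variable X : normedModType R.

Definition is_system (Dset : set U) (Dis : set ({nonneg R} -> U))
    (phi : {nonneg R} -> X -> ({nonneg R} -> U) -> X) : Prop :=
  Dset !=set0 /\
      (forall d, Dis d -> forall s, Dset (d s)) /\
      (forall d tau, Dis d -> Dis (dshift d tau)) /\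
      (forall d1 d2 (t : {nonneg R}), Dis d1 -> Dis d2 -> 0 < t%:num ->
          Dis (dconcat d1 d2 t)) /\
      (forall x d, Dis d -> phi 0%:nng x d = x) /\
      (forall t x d d', Dis d -> Dis d' ->
          (forall s : {nonneg R}, s%:num <= t%:num -> d s = d' s) ->
          phi t x d = phi t x d') /\
      (forall x d, Dis d -> forall (t : {nonneg R}) (eps : R), 0 < eps ->
          exists2 delta : R, 0 < delta &
            forall s : {nonneg R}, `|s%:num - t%:num| < delta ->
              `|phi s x d - phi t x d| < eps) /\
      (forall t h x d, Dis d ->
          phi h (phi t x d) (dshift d t) = phi (tadd t h) x d).

Definition dist_set (A : set X) (x : X) : R := inf [set `|x - y| | y in A].

Definition bounded_X (A : set X) : Prop := exists M : R, forall y, A y -> `|y| <= M.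

Definition RFC (Dis : set ({nonneg R} -> U))
    (phi : {nonneg R} -> X -> ({nonneg R} -> U) -> X) : Prop :=
  forall C tau : R, 0 < C -> 0 < tau ->
    exists M : R, forall x d (t : {nonneg R}),
      `|x| <= C -> Dis d -> t%:num <= tau -> `|phi t x d| <= M.

Definition UGWA (Dis : set ({nonneg R} -> U))
    (phi : {nonneg R} -> X -> ({nonneg R} -> U) -> X) (A : set X) : Prop :=
  forall eps r : R, 0 < eps -> 0 < r ->
    exists tau : R, forall x d, dist_set A x <= r -> Dis d ->
      exists t : {nonneg R}, t%:num <= tau /\ dist_set A (phi t x d) <= eps.

End Defs.

Definition K_inf (R : realType) (sigma : R -> R) : Prop :=
  [/\ {within [set x : R | 0 <= x], continuous sigma},
      (forall a b : R, 0 <= a -> a < b -> sigma a < sigma b),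
      (forall M : R, exists2 s : R, 0 <= s & M < sigma s) &
      sigma 0 = 0].

Definition Lagrange_stable (R : realType) (U X : normedModType R)
    (Dis : set ({nonneg R} -> U))
    (phi : {nonneg R} -> X -> ({nonneg R} -> U) -> X) : Prop :=
  exists (B : set X) (sigma : R -> R) (c : R),
    [/\ B !=set0, bounded_X B, K_inf sigma, 0 < c &
        forall x d (t : {nonneg R}), Dis d ->
          dist_set B (phi t x d) <= sigma (dist_set B x) + c].

(* Main.v *)
Require Import Defs.
From HB Require Import structures.
From mathcomp Require Import all_boot all_order all_algebra.
From mathcomp Require Import all_classical all_reals all_analysis.
From mathcomp Require Import lra.
Import Order.TTheory GRing.Theory Num.Theory.
Import numFieldNormedType.Exports.
Local Open Scope classical_set_scope.
Local Open Scope ring_scope.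
Set Implicit Arguments. Unset Strict Implicit. Unset Printing Implicit Defensive.

Lemma dist_le (R : realType) (X : normedModType R) (A : set X) x y :
  A y -> dist_set A x <= `|x - y|.
Proof.
move=> Ay; apply: ge_inf; last by exists y.
by exists 0 => _ [z _ <-]; exact: normr_ge0.
Qed.

Lemma dist_lt (R : realType) (X : normedModType R) (A : set X) x (e : R) :
  A !=set0 -> dist_set A x < e -> exists2 y, A y & `|x - y| < e.
Proof.
move=> [y0 Ay0] /inf_lt [|_ [y Ay <-] h]; last by exists y.
by exists `|x - y0|, y0.
Qed.

Lemma dist0 (R : realType) (X : normedModType R) (x : X) :
  dist_set [set 0] x = `|x|.
Proof. by rewrite /dist_set image_set1 subr0 inf1. Qed.

Lemma dist_small (R : realType) (X : normedModType R) (A : set X) (MA : R) z :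
  A !=set0 -> (forall y, A y -> `|y| <= MA) -> dist_set A z <= 1 -> `|z| <= MA + 2.
Proof.
move=> A0 AM dz.
have [y Ay hy] : exists2 y, A y & `|z - y| < 2 by apply: dist_lt => //; lra.
have := AM _ Ay; have := ler_normD (z - y) y; rewrite subrK; lra.
Qed.

Lemma dist_big (R : realType) (X : normedModType R) (A : set X) (MA : R) z y :
  A y -> (forall y, A y -> `|y| <= MA) -> dist_set A z <= `|z| + MA.
Proof.
move=> Ay AM; apply: le_trans (dist_le z Ay) _.
have := AM _ Ay; have := ler_normB z y; lra.
Qed.

Lemma phi_split (R : realType) (U X : normedModType R) (Dset : set U)
    (Dis : set ({nonneg R} -> U))
    (phi : {nonneg R} -> X -> ({nonneg R} -> U) -> X) x d (t t1 : {nonneg R}) :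
  is_system Dset Dis phi -> Dis d -> t1%:num <= t%:num ->
  phi t x d = phi (tdiff t t1) (phi t1 x d) (dshift d t1).
Proof.
move=> [_ [_ [_ [_ [_ [_ [_ Hsg]]]]]]] Hd tt1; rewrite Hsg //; congr phi.
apply/val_inj => /=; rewrite (max_idPl _); last by rewrite subr_ge0.
by rewrite addrC subrK.
Qed.

Lemma key_bound (R : realType) (U X : normedModType R) (Dset : set U)
    (Dis : set ({nonneg R} -> U))
    (phi : {nonneg R} -> X -> ({nonneg R} -> U) -> X) (A : set X) (MA : R) :
  is_system Dset Dis phi -> RFC Dis phi -> A !=set0 ->
  (forall y, A y -> `|y| <= MA) -> 0 <= MA -> UGWA Dis phi A ->
  exists K, forall x d t, Dis d -> `|x| <= MA + 2 -> `|phi t x d| <= K.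
Proof.
move=> Hs Hrfc A0 AM MA0 Hu.
have Hsh : forall d tau, Dis d -> Dis (dshift d tau).
  by case: Hs => [_ [_ [H _]]].
have Hsg : forall t h x d, Dis d ->
    phi h (phi t x d) (dshift d t) = phi (tadd t h) x d.
  by case: Hs => [_ [_ [_ [_ [_ [_ [_ H]]]]]]].
case: (A0) => y0 Ay0.
have [K1 HK1] := Hrfc (MA + 2) 1 ltac:(lra) ltr01.
pose r' := `|K1| + MA + 1.
have r'0 : 0 < r' by rewrite /r'; have := normr_ge0 K1; lra.
have [tau' Htau'] := Hu 1 r' ltr01 r'0.
pose T := 1 + `|tau'|.
have T0 : 0 < T by rewrite /T; have := normr_ge0 tau'; lra.
have [K HK] := Hrfc (MA + 2) T ltac:(lra) T0.
exists K.
suff H : forall n : nat, forall x d (t : {nonneg R}), Dis d -> `|x| <= MA + 2 ->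
    t%:num <= n%:R -> `|phi t x d| <= K.
  move=> x d t Hd Hx; apply: (H (Num.truncn t%:num).+1) => //.
  exact/ltW/truncnS_gt.
elim=> [|n IH] x d t Hd Hx Ht.
  apply: HK => //; have := normr_ge0 tau'; rewrite /T; lra.
have Hx1 : `|phi 1%:nng x d| <= K1 by apply: HK1 => //.
have Hdx1 : dist_set A (phi 1%:nng x d) <= r'.
  apply: le_trans (dist_big _ Ay0 AM) _; rewrite /r'.
  have := ler_norm K1; lra.
have [t' [Ht' Hdist]] := Htau' _ _ Hdx1 (Hsh d 1%:nng Hd).
rewrite Hsg // in Hdist.
set t1 := tadd 1%:nng t' in Hdist.
have t1E : t1%:num = 1 + t'%:num by [].
have t'0 : 0 <= t'%:num by [].
case: (leP t%:num t1%:num) => Htt1.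
  apply: HK => //; rewrite /T; have := ler_norm tau'; lra.
rewrite (phi_split x Hs Hd (ltW Htt1)).
apply: IH; first exact: Hsh.
  exact: dist_small Hdist.
rewrite /= ge_max ler0n andbT; move: Ht; rewrite -natr1; lra.
Qed.

Lemma G_bound (R : realType) (U X : normedModType R) (Dset : set U)
    (Dis : set ({nonneg R} -> U))
    (phi : {nonneg R} -> X -> ({nonneg R} -> U) -> X) (A : set X) :
  is_system Dset Dis phi -> RFC Dis phi -> A !=set0 ->
  bounded_X A -> UGWA Dis phi A ->
  forall r : R, 0 < r -> exists M, forall x d t, Dis d -> `|x| <= r ->
    `|phi t x d| <= M.
Proof.
move=> Hs Hrfc A0 [MA' AM'] Hu r r0.
case: (A0) => y0 Ay0.
pose MA := Num.max MA' 0.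
have MA0 : 0 <= MA by rewrite le_max lexx orbT.
have AM : forall y, A y -> `|y| <= MA.
  by move=> y Ay; apply: le_trans (AM' _ Ay) _; rewrite le_max lexx.
have [K HK] := key_bound Hs Hrfc A0 AM MA0 Hu.
pose rr := r + MA + 1.
have rr0 : 0 < rr by rewrite /rr; lra.
have [tau Htau] := Hu 1 rr ltr01 rr0.
have T0 : 0 < `|tau| + 1 by have := normr_ge0 tau; lra.
have [Kr HKr] := Hrfc r (`|tau| + 1) r0 T0.
exists (Num.max Kr K) => x d t Hd Hx.
have Hdx : dist_set A x <= rr.
  by apply: le_trans (dist_big _ Ay0 AM) _; rewrite /rr; lra.
have [t0 [Ht0 Hdist]] := Htau _ _ Hdx Hd.
case: (leP t%:num t0%:num) => Htt0.
  rewrite le_max; apply/orP; left; apply: HKr => //.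
  have := ler_norm tau; lra.
rewrite le_max; apply/orP; right.
rewrite (phi_split x Hs Hd (ltW Htt0)); apply: HK.
  by case: Hs => [_ [_ [H _]]]; exact: H.
exact: dist_small Hdist.
Qed.
Definition clamp (R : realType) (u : R) : R := Num.min (Num.max u 0) 1.

Lemma clamp_ge0 (R : realType) (u : R) : 0 <= clamp u.
Proof. by rewrite /clamp le_min le_max lexx orbT ler01. Qed.

Lemma clamp_mono (R : realType) (u v : R) : u <= v -> clamp u <= clamp v.
Proof.
move=> uv; rewrite /clamp !maxEle !minEle.
case: (leP u 0) => h1; case: (leP v 0) => h2; case: (leP u 1) => h3;
  case: (leP v 1) => h4; rewrite ?ler01; lra.
Qed.

Lemma clamp0 (R : realType) (u : R) : u <= 0 -> clamp u = 0.
Proof. by move=> u0; rewrite /clamp (max_idPr u0) (min_idPl ler01). Qed.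

Lemma clamp1 (R : realType) (u : R) : 1 <= u -> clamp u = 1.
Proof.
move=> u1; have u0 : 0 <= u by apply: le_trans u1; exact: ler01.
by rewrite /clamp (max_idPl u0) (min_idPr u1).
Qed.

Lemma clamp_cont (R : realType) : continuous (@clamp R).
Proof.
have -> : @clamp R = ((fun u => u) \max (fun=> 0)) \min (fun=> 1) by [].
apply: min_fun_continuous; last by move=> x; exact: cvg_cst.
apply: max_fun_continuous; last by move=> x; exact: cvg_cst.
by move=> x; exact: cvg_id.
Qed.

Definition FS (R : realType) (a : nat -> R) (M : nat) (s : R) : R :=
  \sum_(k < M) a k * clamp (s - k%:R).

Definition sig (R : realType) (a : nat -> R) (s : R) : R :=
  s + FS a (Num.truncn s).+1 s.

Lemma FS_stable (R : realType) (a : nat -> R) (M : nat) (s : R) :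
  s < M%:R -> forall p, FS a (M + p) s = FS a M s.
Proof.
move=> sM; elim=> [|p IH]; first by rewrite addn0.
rewrite addnS /FS big_ord_recr /= -/(FS a (M + p) s) IH clamp0 ?mulr0 ?addr0 //.
rewrite subr_le0 natrD; apply: le_trans (ltW sM) _.
by rewrite lerDl ler0n.
Qed.

Lemma sig_eq (R : realType) (a : nat -> R) (M : nat) (s : R) :
  s < M%:R -> sig a s = s + FS a M s.
Proof.
move=> sM; rewrite /sig; congr (_ + _).
have sN : s < (Num.truncn s).+1%:R by apply: truncnS_gt.
case: (leqP M (Num.truncn s).+1) => h.
  by rewrite -(subnKC h) FS_stable.
by rewrite -(subnKC (ltnW h)) FS_stable.
Qed.

Lemma FS_cont (R : realType) (a : nat -> R) (M : nat) : continuous (FS a M).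
Proof.
elim: M => [|M IH].
  have -> : FS a 0 = fun=> 0 by apply: funext => s; rewrite /FS big_ord0.
  by move=> x; exact: cvg_cst.
have -> : FS a M.+1 = FS a M + (fun s => a M * clamp (s - M%:R)).
  by apply: funext => s; rewrite /FS big_ord_recr.
move=> x; apply: continuousD; first exact: IH.
apply: continuousM; first by exact: cvg_cst.
apply: continuous_comp; last exact: clamp_cont.
apply: continuousD; first exact: cvg_id.
exact: cvg_cst.
Qed.

Lemma sig_cont (R : realType) (a : nat -> R) : continuous (sig a).
Proof.
move=> s0.
have sN : s0 < (Num.truncn s0).+1%:R by apply: truncnS_gt.
have H : {near s0, (fun s => s + FS a (Num.truncn s0).+1 s) =1 sig a}.
  by near=> s; rewrite (sig_eq a (M:=(Num.truncn s0).+1)) //; near: s; exact: lt_nbhsl.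
rewrite /continuous_at (sig_eq a sN).
apply: cvg_trans (near_eq_cvg H) _.
apply: continuousD; first exact: cvg_id.
exact: FS_cont.
Unshelve. all: end_near.
Qed.

Lemma FS_ge0 (R : realType) (a : nat -> R) M s :
  (forall k, 0 <= a k) -> 0 <= FS a M s.
Proof.
by move=> a0; apply: sumr_ge0 => k _; apply: mulr_ge0 => //; exact: clamp_ge0.
Qed.

Lemma FS_mono (R : realType) (a : nat -> R) M s t :
  (forall k, 0 <= a k) -> s <= t -> FS a M s <= FS a M t.
Proof.
move=> a0 st; apply: ler_sum => k _; apply: ler_wpM2l => //.
by apply: clamp_mono; rewrite lerD2r.
Qed.

Lemma sig_Kinf (R : realType) (a : nat -> R) :
  (forall k, 0 <= a k) -> K_inf (sig a).
Proof.
move=> a0; split.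
- exact/continuous_subspaceT/sig_cont.
- move=> x y x0 xy.
  have yN : y < (Num.truncn y).+1%:R by apply: truncnS_gt.
  rewrite (sig_eq a yN) (sig_eq a (lt_trans xy yN)).
  have := FS_mono (Num.truncn y).+1 a0 (ltW xy); lra.
- move=> M; exists (Num.max M 0 + 1).
    by rewrite addr_ge0 // le_max lexx orbT.
  have h : 0 <= Num.max M 0 + 1 by rewrite addr_ge0 // le_max lexx orbT.
  rewrite /sig; have := FS_ge0 (Num.truncn (Num.max M 0 + 1)).+1 (Num.max M 0 + 1) a0.
  have : M <= Num.max M 0 by rewrite le_max lexx.
  lra.
- rewrite (sig_eq a (M:=1)) ?ltr01 // /FS big_ord_recr big_ord0 /=.
  by rewrite clamp0 ?mulr0 ?add0r // subr0.
Qed.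

Lemma sigma_ex (R : realType) (G : nat -> R) :
  exists (sigma : R -> R) (c : R), K_inf sigma /\ 0 < c /\
    forall s, 0 <= s -> exists n, s <= n.+1%:R /\ G n <= sigma s + c.
Proof.
pose a k := `|G k.+1|.
have a0 : forall k, 0 <= a k by move=> k; exact: normr_ge0.
exists (sig a), (`|G 0| + 1); split; first exact: sig_Kinf.
split; first by rewrite ltr_wpDl.
move=> s s0.
have sig0 : 0 <= sig a s by rewrite /sig addr_ge0 // FS_ge0.
case: (ltP s 1) => s1.
  exists 0%N; split; first exact: ltW.
  have := ler_norm (G 0); lra.
have := truncn_gt0 s; rewrite s1.
case E : (Num.truncn s) => [|m] // _.
exists m.+1; split.
  by rewrite -E; apply: ltW; apply: truncnS_gt.
have mle : m.+1%:R <= s by rewrite -E truncn_le.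
have : a m <= sig a s.
  rewrite /sig E /FS (bigD1 (Ordinal (leqnSn m.+1))) //=.
  rewrite (@clamp1 _ (s - m%:R)); last by have := mle; rewrite -natr1; lra.
  rewrite mulr1.
  have : 0 <= \sum_(i < m.+2 | i != Ordinal (leqnSn m.+1))
          a i * clamp (s - i%:R).
    by apply: sumr_ge0 => k _; apply: mulr_ge0 => //; exact: clamp_ge0.
  lra.
rewrite /a.
have := ler_norm (G m.+1); have := normr_ge0 (G 0); lra.
Qed.

Theorem lemma21 (R : realType) (U X : normedModType R) (Dset : set U)
    (Dis : set ({nonneg R} -> U))
    (phi : {nonneg R} -> X -> ({nonneg R} -> U) -> X) (A : set X) :
  is_system Dset Dis phi -> RFC Dis phi ->
  A !=set0 -> bounded_X A -> UGWA Dis phi A ->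
  Lagrange_stable Dis phi.
Proof.
move=> Hs Hrfc A0 Ab Hu.
have HG := G_bound Hs Hrfc A0 Ab Hu.
have HG' : forall n : nat, exists M, forall x d t, Dis d -> `|x| <= n.+1%:R ->
    `|phi t x d| <= M.
  by move=> n; apply: HG; rewrite ltr0Sn.
have [G HGs] := boolp.choice HG'.
have [sigma [c [Ks [c0 Hsc]]]] := sigma_ex G.
exists [set 0], sigma, c; split => //.
- by exists 0.
- by exists 0 => y ->; rewrite normr0.
- move=> x d t Hd; rewrite !dist0.
  have [n [xn Gn]] := Hsc `|x| (normr_ge0 x).
  exact: le_trans (HGs n x d t Hd xn) Gn.
Qed.
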